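(* Let $R$ be a proper normed discrete principal ideal domain and let $M$ be a Polish $R$-module. Then exactly one of the following holds: (1) $M$ is countable; (2) there is a prime ideal $\mathfrak p\triangleleft R$ such that $\ell^1(R/\mathfrak p)\sqsubseteq^R M$. Moreover, for distinct prime ideals $\mathfrak p\ne\mathfrak q$ of $R$, $\ell^1(R/\mathfrak p)\not\sqsubseteq^R\ell^1(R/\mathfrak q)$.
   Context: A norm on a ring $R$ is a function $|\cdot|\colon R\to[0,\infty)$ such that $(a,b)\mapsto|a-b|$ is a metric and $|rs|\le|r||s|$; it is proper if every closed ball is compact. Prime ideals are proper (the zero ideal is prime since $R$ is an integral domain). $R/\mathfrak p$ carries the quotient norm $|r+\mathfrak p|=\min_{s\in r+\mathfrak p}|s|$. A Polish $R$-module is a topological left $R$-module with Polish topology. $M\sqsubseteq^R N$ means there is a continuous $R$-linear injection $M\to N$. For a proper normed ring $S$, $\ell^1(S)=\{(s_k)_{k\in\mathbb N}\in S^{\mathbb N}:\sum_k|s_k|/k!<\infty\}$ with norm $\sum_k|s_k|/k!$, an $R$-module via $R\to S$. *)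

(* Defs.v *)
From HB Require Import structures.
From mathcomp Require Import all_boot all_order all_algebra.
From mathcomp Require Import Rstruct.
From Stdlib Require Import ClassicalEpsilon.

Set Implicit Arguments.
Unset Strict Implicit.
Unset Printing Implicit Defensive.

Import Order.TTheory GRing.Theory Num.Theory.
Local Open Scope ring_scope.

Notation Real := Rdefinitions.R.

Definition series_to (u : nat -> Real) (l : Real) : Prop :=
  forall eps : Real, 0 < eps -> exists N : nat, forall n : nat, (N <= n)%N ->
    `| \sum_(0 <= k < n) u k - l | < eps.

Definition summable (u : nat -> Real) : Prop := exists l, series_to u l.

(** The sum of a series (meaningful when [summable u]). *)
Definition series_sum (u : nat -> Real) : Real :=
  epsilon (inhabits (0 : Real)) (fun l => series_to u l).

Section Ring.
Variable R : idomainType.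

(** [N] is a norm: (a,b) |-> N(a-b) is a metric, and N is submultiplicative. *)
Definition is_norm (N : R -> Real) : Prop :=
  [/\ forall a, 0 <= N a,
      forall a b, N (a - b) = 0 <-> a = b,
      forall a b, N (a - b) = N (b - a),
      forall a b c, N (a - c) <= N (a - b) + N (b - c)
    & forall r s, N (r * s) <= N r * N s].

Definition ring_conv (N : R -> Real) (u : nat -> R) (x : R) : Prop :=
  forall eps : Real, 0 < eps -> exists K : nat, forall n, (K <= n)%N ->
    N (u n - x) < eps.

(** Compactness of a subset of the metric space (R, N(_-_)), expressed as
    sequential compactness (equivalent for metric spaces). *)
Definition ring_compact (N : R -> Real) (B : R -> Prop) : Prop :=
  forall u : nat -> R, (forall n, B (u n)) ->
    exists (phi : nat -> nat) (x : R),
      (forall n, (phi n < phi n.+1)%N) /\ B x /\ ring_conv N (fun n => u (phi n)) x.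

Definition norm_proper (N : R -> Real) : Prop :=
  forall (x : R) (r : Real), ring_compact N (fun y => N (y - x) <= r).

Definition norm_discrete (N : R -> Real) : Prop :=
  forall x : R, exists2 e : Real, 0 < e & forall y, N (y - x) < e -> y = x.

Definition is_ideal (I : R -> Prop) : Prop :=
  [/\ I 0, forall a b, I a -> I b -> I (a + b) & forall r a, I a -> I (r * a)].

Definition is_principal_ideal_domain : Prop :=
  forall I : R -> Prop, is_ideal I ->
    exists a : R, forall x, I x <-> exists r, x = r * a.

Definition is_prime_ideal (P : R -> Prop) : Prop :=
  [/\ is_ideal P, ~ P 1 & forall a b, P (a * b) -> P a \/ P b].

(** Quotient norm on R/P, computed on a representative:
    |r + P| = min_{s in r + P} N s.  (The minimum exists for proper N.) *)
Definition quot_norm (N : R -> Real) (P : R -> Prop) (r : R) : Real :=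
  epsilon (inhabits (0 : Real))
    (fun v => (exists s, P (s - r) /\ N s = v) /\
              (forall s, P (s - r) -> v <= N s)).

(** * The space l^1(R/P), represented by sequences of representatives.
    A sequence s : nat -> R represents the element (s_k + P)_k of (R/P)^N. *)

Definition l1_weight (N : R -> Real) (P : R -> Prop) (s : nat -> R) : nat -> Real :=
  fun k => quot_norm N P (s k) / (k`!)%:R.

Definition in_l1 (N : R -> Real) (P : R -> Prop) (s : nat -> R) : Prop :=
  summable (l1_weight N P s).

Definition l1_dist (N : R -> Real) (P : R -> Prop) (s t : nat -> R) : Real :=
  series_sum (l1_weight N P (fun k => s k - t k)).

Definition eqmod_seq (P : R -> Prop) (s t : nat -> R) : Prop :=
  forall k, P (s k - t k).

(** [l1(R/P) ⊑^R X]: there is a continuous R-linear injection from l^1(R/P)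
    into a target X, where the target is presented as: a carrier [X], a
    domain predicate [inX], an equality [eqX] (equality of represented
    elements), addition, scalar multiplication and a (pseudo)metric [dX].
    The map is given on representatives and is required to be well defined,
    i.e. [eqX (f s) (f t) <-> s, t represent the same element]. *)
Definition l1_embeds (N : R -> Real) (P : R -> Prop)
    (X : Type) (inX : X -> Prop) (eqX : X -> X -> Prop)
    (addX : X -> X -> X) (scaleX : R -> X -> X) (dX : X -> X -> Real) : Prop :=
  exists f : (nat -> R) -> X,
    [/\ forall s, in_l1 N P s -> inX (f s),
        forall (r : R) s t, in_l1 N P s -> in_l1 N P t ->
          eqX (f (fun k => r * s k + t k)) (addX (scaleX r (f s)) (f t)),
        forall s t, in_l1 N P s -> in_l1 N P t ->
          (eqX (f s) (f t) <-> eqmod_seq P s t)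
      & forall s, in_l1 N P s -> forall eps : Real, 0 < eps ->
          exists2 delta : Real, 0 < delta & forall t, in_l1 N P t ->
            l1_dist N P s t < delta -> dX (f s) (f t) < eps].

Definition l1_embeds_l1 (N : R -> Real) (P Q : R -> Prop) : Prop :=
  l1_embeds N P (in_l1 N Q) (eqmod_seq Q)
    (fun s t k => s k + t k) (fun r s k => r * s k) (l1_dist N Q).

Section Module.
Variable M : lmodType R.

Definition is_metric (d : M -> M -> Real) : Prop :=
  [/\ forall x y, 0 <= d x y,
      forall x y, d x y = 0 <-> x = y,
      forall x y, d x y = d y x
    & forall x y z, d x z <= d x y + d y z].

Definition metric_complete (d : M -> M -> Real) : Prop :=
  forall u : nat -> M,
    (forall eps : Real, 0 < eps -> exists K : nat, forall m n,
        (K <= m)%N -> (K <= n)%N -> d (u m) (u n) < eps) ->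
    exists x : M, forall eps : Real, 0 < eps -> exists K : nat, forall n,
        (K <= n)%N -> d (u n) x < eps.

Definition metric_separable (d : M -> M -> Real) : Prop :=
  exists D : nat -> M, forall (x : M) (eps : Real), 0 < eps ->
    exists n, d x (D n) < eps.

Definition polish_module (N : R -> Real) (d : M -> M -> Real) : Prop :=
  [/\ is_metric d, metric_complete d, metric_separable d,
      forall (x y : M) (eps : Real), 0 < eps -> exists2 delta : Real, 0 < delta &
        forall x' y', d x x' < delta -> d y y' < delta -> d (x + y) (x' + y') < eps
    &
      forall (r : R) (x : M) (eps : Real), 0 < eps -> exists2 delta : Real, 0 < delta &
        forall r' x', N (r - r') < delta -> d x x' < delta ->
          d (r *: x) (r' *: x') < eps].

Definition countable_type (T : Type) : Prop :=
  exists f : nat -> T, forall x : T, exists n, f n = x.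

End Module.
End Ring.

(* Main.v *)
Require Import Defs.
From mathcomp Require Import all_boot all_order all_algebra.
From mathcomp Require Import Rstruct lra ring.
From Stdlib Require Import ClassicalEpsilon Classical FunctionalExtensionality.
From Stdlib Require Rseries Rcomplete SeqProp Rbasic_fun RIneq.
Set Implicit Arguments.
Unset Strict Implicit.
Unset Printing Implicit Defensive.
Import Order.TTheory GRing.Theory Num.Theory.
Local Open Scope ring_scope.
Set Default Proof Using "All".

Lemma psum_mono (u : nat -> Real) : (forall k, 0 <= u k) ->
  forall n m, (n <= m)%N -> \sum_(0 <= k < n) u k <= \sum_(0 <= k < m) u k.
Proof.
move=> u0 n m /subnKC <-; elim: (m - n)%N => [|j IH]; first by rewrite addn0.
by rewrite addnS big_nat_recr //= ?leq_addr //; apply: le_trans IH _; rewrite lerDl.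
Qed.

Lemma summable_of_bounded (u : nat -> Real) (B : Real) :
  (forall k, 0 <= u k) -> (forall n, \sum_(0 <= k < n) u k <= B) -> summable u.
Proof.
move=> u0 uB.
have gr : Rseries.Un_growing (fun n => \sum_(0 <= k < n) u k).
  move=> n; apply/RleP; apply: psum_mono => //.
have ub : SeqProp.has_ub (fun n => \sum_(0 <= k < n) u k).
  exists B => x [i ->]; apply/RleP; exact: uB.
have [l hl] := SeqProp.growing_cv _ gr ub.
exists l => eps e0.
have /RltP e0' : (0 < eps)%R by [].
have [N HN] := hl eps e0'.
exists N => n Nn.
have := HN n (ssrnat.leP Nn).
rewrite /Rfunctions.Rdist => /RltP; done.
Qed.

Lemma series_sum_spec (u : nat -> Real) : summable u -> series_to u (series_sum u).
Proof. move=> su; rewrite /series_sum; exact: epsilon_spec. Qed.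

Lemma psum_le_lim (u : nat -> Real) l : (forall k, 0 <= u k) -> series_to u l ->
  forall n, \sum_(0 <= k < n) u k <= l.
Proof.
move=> u0 ul n; rewrite leNgt; apply/negP => hlt.
have [N HN] : exists N, forall m, (N <= m)%N -> `|\sum_(0 <= k < m) u k - l| < \sum_(0 <= k < n) u k - l.
  by apply: ul; rewrite subr_gt0.
have := HN (maxn n N) (leq_maxr _ _).
have := psum_mono u0 (leq_maxl n N).
set a := \sum_(0 <= k < maxn n N) u k; set b := \sum_(0 <= k < n) u k.
move=> hab; rewrite ltr_norml => /andP[_]; lra.
Qed.

Lemma term_le_lim (u : nat -> Real) l : (forall k, 0 <= u k) -> series_to u l ->
  forall k, u k <= l.
Proof.
move=> u0 ul k; apply: le_trans (psum_le_lim u0 ul k.+1).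
rewrite big_nat_recr //= lerDr; apply: sumr_ge0 => i _; exact: u0.
Qed.

Lemma term_le_sum (u : nat -> Real) : (forall k, 0 <= u k) -> summable u ->
  forall k, u k <= series_sum u.
Proof. move=> u0 su; apply: term_le_lim => //; exact: series_sum_spec. Qed.

Lemma psum_le_sum (u : nat -> Real) : (forall k, 0 <= u k) -> summable u ->
  forall n, \sum_(0 <= k < n) u k <= series_sum u.
Proof. move=> u0 su; apply: psum_le_lim => //; exact: series_sum_spec. Qed.
Definition cov (T : Type) (A : T -> Prop) :=
  exists g : nat -> T, forall x, A x -> exists n, g n = x.

Definition unp (p : nat) : nat * nat := odflt (0, 0)%N (unpickle p).
Lemma unpP i j : unp (pickle (i, j)) = (i, j).
Proof. by rewrite /unp pickleK. Qed.
Definition unp3 (p : nat) : nat * nat * nat := odflt (0, 0, 0)%N (unpickle p).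
Lemma unp3P i j k : unp3 (pickle (i, j, k)) = (i, j, k).
Proof. by rewrite /unp3 pickleK. Qed.

Section IdealFacts.
Variable R : idomainType.
Variable P : R -> Prop.
Hypothesis hP : is_ideal P.
Lemma I0 : P 0. Proof. by case: hP. Qed.
Lemma IN a : P a -> P (- a).
Proof. by case: hP => _ _ h /(h (-1)); rewrite mulN1r. Qed.
Lemma ID a b : P a -> P b -> P (a + b). Proof. by case: hP => _ h _; apply: h. Qed.
Lemma IB a b : P a -> P b -> P (a - b). Proof. by move=> ha /IN; apply: ID. Qed.
Lemma IM r a : P a -> P (r * a). Proof. by case: hP => _ _ h; apply: h. Qed.
Lemma IMr r a : P a -> P (a * r). Proof. by rewrite mulrC; apply: IM. Qed.

End IdealFacts.

Section NormFacts.
Variable R : idomainType.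
Variable N : R -> Real.
Hypothesis hN : is_norm N.
Hypothesis hprop : norm_proper N.
Hypothesis hdisc : norm_discrete N.

Lemma N_ge0 x : 0 <= N x. Proof. by case: hN. Qed.
Lemma N0 : N 0 = 0.
Proof. by case: hN => _ h _ _ _; have := (h 0 0).2 erefl; rewrite subrr. Qed.
Lemma N_eq0 x : N x = 0 -> x = 0.
Proof. by case: hN => _ h _ _ _ hx; apply: (h x 0).1; rewrite subr0. Qed.
Lemma NN x : N (- x) = N x.
Proof. by case: hN => _ _ h _ _; have := h 0 x; rewrite sub0r subr0. Qed.
Lemma Ntri a b : N (a + b) <= N a + N b.
Proof.
case: hN => _ _ _ h _; have := h a 0 (- b).
by rewrite opprK subr0 add0r.
Qed.

Lemma ball_fin (L : Real) : exists l : seq R, forall y, N y <= L -> y \in l.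
Proof.
apply: NNPP => H.
have H' : forall l : seq R, exists y, N y <= L /\ y \notin l.
  move=> l; apply: NNPP => H2; apply: H; exists l => y Hy.
  apply: NNPP => H3; apply: H2; exists y; split => //; exact/negP.
pose nxt (l : seq R) := epsilon (inhabits 0) (fun y => N y <= L /\ y \notin l).
have nxtP l : N (nxt l) <= L /\ nxt l \notin l by apply: (epsilon_spec (inhabits 0) (fun y => N y <= L /\ y \notin l)); exact: H' l.
pose fix lst n := if n is n'.+1 then nxt (lst n') :: lst n' else [::].
pose u n := nxt (lst n).
have inl k n : (k < n)%N -> u k \in lst n.
  elim: n => // n IH; rewrite ltnS leq_eqVlt => /orP[/eqP->|/IH h].
    by rewrite /= inE eqxx.
  by rewrite /= inE h orbT.
have ub : forall n, N (u n - 0) <= L by move=> n; rewrite subr0; case: (nxtP (lst n)).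
have [phi [x [phiinc [_ cv]]]] := hprop ub.
have [e e0 he] := hdisc x.
have [K HK] := cv e e0.
have a1 := he _ (HK K (leqnn K)).
have a2 := he _ (HK K.+1 (leqnSn K)).
have := inl _ _ (phiinc K); rewrite a1 -a2.
by case: (nxtP (lst (phi K.+1))) => _ /negP.
Qed.

Definition ballL (L : Real) : seq R :=
  epsilon (inhabits [::]) (fun l => forall y, N y <= L -> y \in l).
Lemma ballLP L y : N y <= L -> y \in ballL L.
Proof. by move: y; apply: (epsilon_spec (inhabits [::]) (fun l => forall y, N y <= L -> y \in l)); exact: ball_fin. Qed.

Definition enumR (p : nat) : R := nth 0 (ballL (unp p).1%:R) (unp p).2.
Lemma enumR_surj y : exists p, enumR p = y.
Proof.
have hb := archi_boundP (N_ge0 y).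
exists (pickle (Num.Def.archi_bound (N y), index y (ballL (Num.Def.archi_bound (N y))%:R))).
rewrite /enumR unpP /=; apply: nth_index; apply: ballLP; exact: ltW.
Qed.

Lemma list_min (l : seq R) (Q : R -> Prop) : (exists y, y \in l /\ Q y) ->
  exists y, [/\ y \in l, Q y & forall z, z \in l -> Q z -> N y <= N z].
Proof.
elim: l => [[y []] //|a l IH] [y [yin Qy]].
case: (classic (exists y, y \in l /\ Q y)) => [/IH [z [zin Qz zm]]|nol].
  case: (classic (Q a)) => Qa.
    case: (lerP (N a) (N z)) => az.
      exists a; split; rewrite ?inE ?eqxx // => w; rewrite inE => /orP[/eqP->|/zm h /h]//.
      by apply: le_trans.
    exists z; split; rewrite ?inE ?zin ?orbT // => w; rewrite inE => /orP[/eqP->|/zm //] _.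
    exact: ltW.
  exists z; split; rewrite ?inE ?zin ?orbT // => w; rewrite inE => /orP[/eqP->|/zm //] //.
have Qa : Q a.
  move: yin; rewrite inE => /orP[/eqP<-//|yl]; case: nol; by exists y.
exists a; split; rewrite ?inE ?eqxx // => w; rewrite inE => /orP[/eqP->//|wl Qw].
case: nol; by exists w.
Qed.

Section Ideal.
Variable P : R -> Prop.
Hypothesis hP : is_ideal P.

Lemma qn_spec r : (exists s, P (s - r) /\ N s = quot_norm N P r) /\
  (forall s, P (s - r) -> quot_norm N P r <= N s).
Proof.
rewrite /quot_norm; apply: (epsilon_spec (inhabits 0)
  (fun v => (exists s, P (s - r) /\ N s = v) /\ (forall s, P (s - r) -> v <= N s))).
have [y [yin Qy ym]] := list_min (l := ballL (N r)) (Q := fun s => P (s - r))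
  (ex_intro _ r (conj (ballLP (lexx _)) (eq_ind_r P (I0 hP) (subrr r)))).
exists (N y); split; first by exists y.
move=> s Ps; case: (lerP (N s) (N r)) => sr; first by apply: ym => //; exact: ballLP.
by apply: le_trans (ltW sr); apply: ym => //; [exact: ballLP | rewrite subrr; exact: I0].
Qed.

Notation qn := (quot_norm N P).
Lemma qn_ge0 r : 0 <= qn r.
Proof. by case: (qn_spec r) => [[s [_ <-]] _]; exact: N_ge0. Qed.
Lemma qn_le r : qn r <= N r.
Proof. by case: (qn_spec r) => _ h; apply: h; rewrite subrr; exact: I0. Qed.
Lemma qn0 : qn 0 = 0.
Proof. by apply/eqP; rewrite eq_le qn_ge0 andbT -N0 qn_le. Qed.
Lemma qn_add a b : qn (a + b) <= qn a + qn b.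
Proof.
case: (qn_spec a) => [[s [Ps <-]] _]; case: (qn_spec b) => [[t [Pt <-]] _].
case: (qn_spec (a + b)) => _ h; apply: le_trans (Ntri s t); apply: h.
by have := ID hP Ps Pt; rewrite opprD addrACA.
Qed.
Lemma qn_opp a : qn (- a) = qn a.
Proof.
have H x : qn (- x) <= qn x.
  case: (qn_spec x) => [[s [Ps <-]] _]; case: (qn_spec (- x)) => _ h.
  by rewrite -NN; apply: h; rewrite opprK addrC; have := IN hP Ps; rewrite opprB.
by apply/eqP; rewrite eq_le H /=; have := H (- a); rewrite opprK.
Qed.
Lemma qn_pos : exists2 e : Real, 0 < e & forall a, ~ P a -> e <= qn a.
Proof.
have [e e0 he] := hdisc 0; exists e => // a Pa.
case: (qn_spec a) => [[s [Ps <-]] _]; rewrite leNgt; apply/negP => hs.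
have s0 : s = 0 by apply: he; rewrite subr0.
by apply: Pa; move: Ps; rewrite s0 sub0r => /(IN hP); rewrite opprK.
Qed.

Definition rho (a : R) : R := epsilon (inhabits 0) (fun s => P (s - a) /\ N s = qn a).
Lemma rhoP a : P (rho a - a) /\ N (rho a) = qn a.
Proof. by rewrite /rho; apply: (epsilon_spec (inhabits 0) (fun s => P (s - a) /\ N s = qn a)); case: (qn_spec a). Qed.

End Ideal.
End NormFacts.

Section L1.
Variable R : idomainType.
Variable N : R -> Real.
Hypothesis hN : is_norm N.
Hypothesis hprop : norm_proper N.
Hypothesis hdisc : norm_discrete N.
Variable P : R -> Prop.
Hypothesis hP : is_ideal P.
Notation qn := (quot_norm N P).

Lemma fact_gt0R k : 0 < (k`!)%:R :> Real.
Proof. by rewrite ltr0n fact_gt0. Qed.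

Lemma w_ge0 s k : 0 <= l1_weight N P s k.
Proof. by rewrite /l1_weight divr_ge0 ?ler0n // (qn_ge0 hN hprop hdisc hP). Qed.

Lemma l1_bound s : in_l1 N P s -> exists c : nat, forall k, qn (s k) <= c%:R * (k`!)%:R.
Proof.
move=> hs; set S := series_sum (l1_weight N P s).
have hS k : qn (s k) / (k`!)%:R <= S := term_le_sum (@w_ge0 s) hs k.
have S0 : 0 <= S by apply: le_trans (hS 0%N); exact: w_ge0.
exists (Num.Def.archi_bound S) => k.
rewrite -ler_pdivrMr ?fact_gt0R //; apply: le_trans (hS k) _; exact/ltW/archi_boundP.
Qed.

Lemma l1_sub s t : in_l1 N P s -> in_l1 N P t -> in_l1 N P (fun k => s k - t k).
Proof.
move=> hs ht; apply: (@summable_of_bounded _ (series_sum (l1_weight N P s) + series_sum (l1_weight N P t))).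
  exact: w_ge0.
move=> n; apply: le_trans (lerD (psum_le_sum (@w_ge0 s) hs n) (psum_le_sum (@w_ge0 t) ht n)).
rewrite -big_split /=; apply: ler_sum => k _; rewrite /l1_weight -mulrDl.
rewrite ler_wpM2r ?invr_ge0 ?ler0n //.
by rewrite -(qn_opp hN hprop hdisc hP (t k)); apply: (qn_add hN hprop hdisc hP).
Qed.

Lemma l1_fin s n : (forall k, (n <= k)%N -> s k = 0) -> in_l1 N P s.
Proof.
move=> hs; apply: (@summable_of_bounded _ (\sum_(0 <= k < n) l1_weight N P s k)); first exact: w_ge0.
move=> m; case: (leqP m n) => mn; first by apply: psum_mono => //; exact: w_ge0.
rewrite (@big_cat_nat _ _ _ n 0 m _ _ (leq0n n) (ltnW mn)) /=.
rewrite -[X in _ <= X]addr0 lerD2l big_nat_cond big1 //.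
move=> k /andP[/andP[nk _] _]; rewrite /l1_weight hs // (qn0 hN hprop hdisc hP) mul0r //.
Qed.

Lemma two_le_fact n : (2 ^ n <= n.+1`!)%N.
Proof.
elim: n => // n IH; rewrite expnS factS; apply: leq_mul => //.
Qed.

Lemma fact_sum n : \sum_(0 <= k < n.+1) ((k`!)%:R : Real)^-1 <= 3 - 2 / 2 ^+ n.
Proof.
elim: n => [|n IH]; first by rewrite big_nat1 /= expr0 invr1; lra.
rewrite big_nat_recr //=; apply: le_trans (lerD IH (lexx _)) _.
have h2 : ((n.+1)`!)%:R^-1 <= (2 ^+ n : Real)^-1.
  rewrite lef_pV2 ?posrE ?exprn_gt0 ?fact_gt0R //.
  by rewrite -natrX ler_nat two_le_fact.
have p0 : 0 < (2 ^+ n : Real) by rewrite exprn_gt0.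
rewrite exprS invfM.
set x := (2 ^+ n : Real)^-1 in h2 *.
suff : 3 - 2 * x + x = 3 - 2 * (2^-1 * x) by move=> <-; lra.
rewrite mulrA divff // ?mul1r; lra.
Qed.

Lemma l1_bool (b : nat -> bool) : in_l1 N P (fun k => (b k)%:R).
Proof.
apply: (@summable_of_bounded _ (3 * N 1)); first exact: w_ge0.
move=> n; apply: le_trans (_ : \sum_(0 <= k < n) N 1 * ((k`!)%:R)^-1 <= _).
  apply: ler_sum => k _; rewrite /l1_weight ler_wpM2r ?invr_ge0 ?ler0n //.
  case: (b k) => /=. rewrite ?mulr1n. exact: (qn_le hN hprop hdisc hP).
  by rewrite (qn0 hN hprop hdisc hP) N_ge0.
rewrite -mulr_sumr mulrC ler_wpM2r ?N_ge0 //.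
case: n => [|n]; first by rewrite big_geq //; lra.
apply: le_trans (fact_sum n) _; rewrite lerBlDr lerDl divr_ge0 // exprn_ge0 //.
Qed.

End L1.

Section Annih.
Variable R : idomainType.
Hypothesis hpid : is_principal_ideal_domain R.
Variable M : lmodType R.

Definition ann (I : R -> Prop) : M -> Prop := fun m => forall a, I a -> a *: m = 0.
Definition addI (P : R -> Prop) (a : R) : R -> Prop :=
  fun x => exists p r, P p /\ x = p + r * a.

Lemma addI_ideal P a : is_ideal P -> is_ideal (addI P a).
Proof.
move=> hP; split.
- by exists 0, 0; rewrite mul0r addr0; split => //; exact: I0.
- move=> x y [p [r [Pp ->]]] [p' [r' [Pp' ->]]]; exists (p + p'), (r + r'); split.
    exact: ID.
  by rewrite mulrDl addrACA.
- move=> s x [p [r [Pp ->]]]; exists (s * p), (s * r); split; first exact: (IM hP).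
  by rewrite mulrDr mulrA.
Qed.

Lemma addI_sup P a x : is_ideal P -> P x -> addI P a x.
Proof. by move=> hP Px; exists x, 0; rewrite mul0r addr0. Qed.
Lemma addI_a P a : is_ideal P -> addI P a a.
Proof. by move=> hP; exists 0, 1; rewrite mul1r add0r; split => //; exact: I0. Qed.

Definition badI (I : R -> Prop) := is_ideal I /\ ~ cov (ann I).

Lemma max_bad : ~ cov (fun _ : M => True) -> exists P, badI P /\
  forall J, is_ideal J -> (forall x, P x -> J x) -> ~ cov (ann J) -> forall x, J x -> P x.
Proof.
move=> Mu; apply: NNPP => H.
have Hn : forall I, badI I -> exists J, badI J /\ (forall x, I x -> J x) /\ exists x, J x /\ ~ I x.
  move=> I bI; apply: NNPP => H2; apply: H; exists I; split => // J hJ IJ nJ x Jx.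
  apply: NNPP => Ix; apply: H2; exists J; split; first by split.
  by split => //; exists x.
pose nxt I := epsilon (inhabits (fun _ : R => True))
  (fun J => badI J /\ (forall x, I x -> J x) /\ exists x, J x /\ ~ I x).
have nxtP I : badI I -> badI (nxt I) /\ (forall x, I x -> nxt I x) /\ exists x, nxt I x /\ ~ I x.
  move=> bI; apply: (epsilon_spec (inhabits (fun _ : R => True))
   (fun J => badI J /\ (forall x, I x -> J x) /\ exists x, J x /\ ~ I x)); exact: Hn.
pose fix ch n := if n is n'.+1 then nxt (ch n') else (fun x : R => x = 0).
have chb n : badI (ch n).
  elim: n => [|n IH]; last by case: (nxtP _ IH).
  split.
    split; first by [].
      by move=> a b /= -> ->; rewrite addr0.
    by move=> r a /= ->; rewrite mulr0.
  move=> [g hg]; apply: Mu; exists g => x _; apply: hg => a /= ->; exact: scale0r.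
have chm n m : (n <= m)%N -> forall x, ch n x -> ch m x.
  move=> /subnKC <-; elim: (m - n)%N => [|j IH] x; first by rewrite addn0.
  by rewrite addnS => /IH /=; case: (nxtP _ (chb (n + j)%N)) => _ [h _]; apply: h.
pose U x := exists n, ch n x.
have hU : is_ideal U.
  split; first by exists 0%N.
  - move=> a b [n an] [m bm]; exists (maxn n m).
    case: (chb (maxn n m)) => hI _; apply: (ID hI).
      by apply: chm an; exact: leq_maxl.
    by apply: chm bm; exact: leq_maxr.
  - move=> r a [n an]; exists n; case: (chb n) => hI _; exact: (IM hI).
have [g hg] := hpid hU.
have [n gn] : U g by apply/hg; exists 1; rewrite mul1r.
case: (nxtP _ (chb n)) => _ [_ [x [xn nx]]]; apply: nx.
have [r ->] : exists r, x = r * g by apply/hg; exists n.+1.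
by case: (chb n) => hI _; exact: (IM hI).
Qed.

Lemma max_bad_prime P : badI P ->
  (forall J, is_ideal J -> (forall x, P x -> J x) -> ~ cov (ann J) -> forall x, J x -> P x) ->
  is_prime_ideal P /\ forall h, ~ P h -> cov (ann (addI P h)).
Proof.
move=> [hP nP] hmax.
have hcov h : ~ P h -> cov (ann (addI P h)).
  move=> nh; apply: NNPP => nc; apply: nh; apply: hmax (addI_ideal h hP) _ nc _ (addI_a h hP).
  by move=> x; apply: addI_sup.
split => //; split => //.
  move=> P1; apply: nP; exists (fun _ => 0) => m hm; exists 0%N.
  by rewrite -(hm 1 P1) scale1r.
move=> a b Pab; apply: NNPP => /not_or_and [na nb].
have [g1 hg1] := hcov _ nb; have [g2 hg2] := hcov _ na.
apply: nP.
pose h i := epsilon (inhabits (0 : M)) (fun m' => ann P m' /\ a *: m' = g1 i).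
exists (fun q => h (unp q).1 + g2 (unp q).2) => m hm.
have [i hi] : exists i, g1 i = a *: m.
  apply: hg1 => x [p [r [Pp ->]]]; rewrite scalerA mulrDl scalerDl.
  rewrite (hm (p * a)) ?(hm (r * b * a)) ?addr0 //; first by rewrite -mulrA (mulrC b a); exact: (IM hP).
  exact: (IMr hP).
have [hP' hPa] : ann P (h i) /\ a *: h i = g1 i.
  by apply: (epsilon_spec (inhabits (0 : M)) (fun m' => ann P m' /\ a *: m' = g1 i)); exists m.
have [j hj] : exists j, g2 j = m - h i.
  apply: hg2 => x [p [r [Pp ->]]].
  rewrite scalerDl !scalerBr hm // hP' // subrr add0r -!scalerA hPa hi subrr //.
by exists (pickle (i, j)); rewrite unpP /= hj addrC subrK.
Qed.

Lemma fiber_cov P : is_ideal P -> (forall h, ~ P h -> cov (ann (addI P h))) ->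
  exists G : R -> M -> nat -> M, forall r y m, ~ P r -> ann P m -> r *: m = y ->
    exists j, G r y j = m.
Proof.
move=> hP hc.
pose gr r := epsilon (inhabits (fun _ : nat => (0 : M)))
  (fun g => forall x, ann (addI P r) x -> exists n, g n = x).
pose hb r y := epsilon (inhabits (0 : M)) (fun m => ann P m /\ r *: m = y).
exists (fun r y j => hb r y + gr r j) => r y m nr hm hy.
have [hb1 hb2] : ann P (hb r y) /\ r *: hb r y = y.
  by apply: (epsilon_spec (inhabits (0 : M)) (fun m => ann P m /\ r *: m = y)); exists m.
have ggr : forall x, ann (addI P r) x -> exists n, gr r n = x.
  by apply: (epsilon_spec (inhabits (fun _ : nat => (0 : M))) (fun g => forall x, ann (addI P r) x -> exists n, g n = x)); exact: hc.
have : ann (addI P r) (m - hb r y).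
  move=> x [p [s [Pp ->]]].
  by rewrite scalerDl !scalerBr hm // hb1 // subrr add0r -!scalerA hy hb2 subrr.
by case/ggr => j hj; exists j; rewrite hj addrC subrK.
Qed.

End Annih.

Section Polish.
Variable R : idomainType.
Variable N : R -> Real.
Variable M : lmodType R.
Variable d : M -> M -> Real.
Hypothesis hM : polish_module N d.

Lemma d_ge0 x y : 0 <= d x y. Proof. by case: hM => [[h _ _ _] _ _ _ _]. Qed.
Lemma d_eq0 x y : d x y = 0 -> x = y. Proof. by case: hM => [[_ h _ _] _ _ _ _] /h. Qed.
Lemma d_xx x : d x x = 0. Proof. by case: hM => [[_ h _ _] _ _ _ _]; apply/h. Qed.
Lemma d_sym x y : d x y = d y x. Proof. by case: hM => [[_ _ h _] _ _ _ _]. Qed.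
Lemma d_tri x y z : d x z <= d x y + d y z. Proof. by case: hM => [[_ _ _ h] _ _ _ _]. Qed.

Lemma cond (A : M -> Prop) : ~ cov A ->
  exists c, A c /\ forall rho : Real, 0 < rho -> ~ cov (fun x => A x /\ d c x < rho).
Proof.
move=> nA; apply: NNPP => H.
have H' : forall c, A c -> exists2 rho : Real, 0 < rho & cov (fun x => A x /\ d c x < rho).
  move=> c Ac; apply: NNPP => H2; apply: H; exists c; split => // rho r0 cr.
  by apply: H2; exists rho.
case: hM => _ _ [D hD] _ _.
pose ball n j := fun x => A x /\ d (D n) x < (j.+1%:R)^-1.
pose gg n j := epsilon (inhabits (fun _ : nat => (0 : M)))
  (fun g => forall x, ball n j x -> exists i, g i = x).
apply: nA; exists (fun q => gg (unp3 q).1.1 (unp3 q).1.2 (unp3 q).2) => a Aa.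
have [rho r0 [g hg]] := H' a Aa.
set j := Num.Def.archi_bound (2 / rho).
have hj : 2 / rho < j%:R by apply: archi_boundP; rewrite divr_ge0 // ltW.
have j1 : 0 < (j.+1%:R : Real) by rewrite ltr0n.
have hj' : (j.+1%:R : Real)^-1 + (j.+1%:R)^-1 < rho.
  rewrite -(ltr_pM2r j1) mulrDl mulVf ?gt_eqF //.
  rewrite ltr_pdivrMr // in hj.
  rewrite mulrC; apply: (@lt_le_trans _ _ (j%:R * rho)); first by lra.
  rewrite ler_pM2r // ler_nat //.
have ji : 0 < (j.+1%:R : Real)^-1 by rewrite invr_gt0.
have [n hn] := hD a _ ji.
have hgg : forall x, ball n j x -> exists i, gg n j i = x.
  apply: (epsilon_spec (inhabits (fun _ : nat => (0 : M)))
    (fun g => forall x, ball n j x -> exists i, g i = x)).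
  exists g => x [Ax hx]; apply: hg; split => //.
  apply: le_lt_trans (d_tri a (D n) x) _; exact: lt_trans (ltrD hn hx) hj'.
have [i hi] := hgg a (conj Aa (eq_ind _ (fun z => z < _) hn _ (d_sym _ _))).
by exists (pickle (n, j, i)); rewrite unp3P.
Qed.

Lemma small_unc (A : M -> Prop) : (forall x y, A x -> A y -> A (x - y)) -> ~ cov A ->
  forall rho : Real, 0 < rho -> ~ cov (fun x => A x /\ d 0 x < rho).
Proof.
move=> hA nA rho r0 [g hg].
have [c [Ac hc]] := cond nA.
case: hM => _ _ _ hadd _.
have [delta d0 hdel] := hadd c (- c) rho r0.
apply: (hc delta d0); exists (fun i => g i + c) => x [Ax hx].
have [i hi] : exists i, g i = x - c.
  apply: hg; split; first exact: hA.
  by have := hdel x (- c) hx; rewrite d_xx addrN; apply.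
by exists i; rewrite hi subrK.
Qed.

End Polish.

Lemma fact_mono k K : (k <= K)%N -> (k`! <= K`!)%N.
Proof.
move=> /subnKC <-; elim: (K - k)%N => [|j IH]; first by rewrite addn0.
by rewrite addnS factS; apply: leq_trans IH _; apply: leq_pmull.
Qed.

Lemma fin_delta (T : eqType) (l : seq T) (Q : T -> Real -> Prop) :
  (forall x a b, Q x a -> 0 < b -> b <= a -> Q x b) ->
  (forall x, x \in l -> exists2 a, 0 < a & Q x a) ->
  exists2 a, 0 < a & forall x, x \in l -> Q x a.
Proof.
move=> Qm; elim: l => [_|y l IH H]; first by exists 1.
have [a a0 Ha] : exists2 a, 0 < a & forall x, x \in l -> Q x a.
  by apply: IH => x xl; apply: H; rewrite inE xl orbT.
have [b b0 Hb] : exists2 b, 0 < b & Q y b by apply: H; rewrite inE eqxx.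
exists (Num.min a b); first by rewrite lt_min a0 b0.
move=> x; rewrite inE => /orP[/eqP->|xl].
  by apply: Qm Hb _ _; rewrite ?lt_min ?a0 ?b0 // ge_min lexx orbT.
by apply: Qm (Ha x xl) _ _; rewrite ?lt_min ?a0 ?b0 // ge_min lexx.
Qed.

Section Construction.
Variable R : idomainType.
Variable N : R -> Real.
Hypothesis hN : is_norm N.
Hypothesis hprop : norm_proper N.
Hypothesis hdisc : norm_discrete N.
Variable M : lmodType R.
Variable d : M -> M -> Real.
Hypothesis hM : polish_module N d.
Variable P : R -> Prop.
Hypothesis hP : is_ideal P.
Hypothesis hPu : ~ cov (@ann R M P).
Variable G : R -> M -> nat -> M.
Hypothesis hG : forall r y m, ~ P r -> ann P m -> r *: m = y -> exists j, G r y j = m.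

Definition S (m : nat -> M) K (u : nat -> R) : M := \sum_(0 <= k < K) u k *: m k.
Definition LK (K : nat) : Real := (K * K`!)%:R.
Definition bndK K (u : nat -> R) := forall k, (k < K)%N -> N (u k) <= LK K.

Lemma SS m K u : S m K.+1 u = S m K u + u K *: m K.
Proof. by rewrite /S big_nat_recr. Qed.
Lemma S0 m u : S m 0 u = 0.
Proof. by rewrite /S big_geq. Qed.

Lemma sums_fin m K L : exists l : seq M, forall u,
  (forall k, (k < K)%N -> N (u k) <= L) -> S m K u \in l.
Proof.
elim: K => [|K [l hl]]; first by exists [:: 0] => u _; rewrite S0 inE.
exists [seq a + r *: m K | a <- l, r <- ballL N L] => u hu.
rewrite SS; apply: allpairs_f; first by apply: hl => k kK; apply: hu; exact: ltnW.
apply: ballLP => //; exact: hu.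
Qed.

Lemma span_cov m K : cov (fun y => exists w, S m K w = y).
Proof.
elim: K => [|K [g hg]]; first by exists (fun _ => 0) => y [w <-]; exists 0%N; rewrite S0.
exists (fun q => g (unp q).1 + enumR N (unp q).2 *: m K) => y [w <-].
have [i hi] := hg (S m K w) (ex_intro _ w erefl).
have [j hj] := enumR_surj hN hprop hdisc (w K).
by exists (pickle (i, j)); rewrite unpP /= hi hj SS.
Qed.

Definition stepspec K (mp : nat -> M) (ep : Real) (q : M * Real) :=
 [/\ 0 < q.2, q.2 <= ep / 2,
   (forall u u', bndK K u -> bndK K u' -> S mp K u != S mp K u' ->
      5 * q.2 < d (S mp K u) (S mp K u')),
   ann P q.1
  & (forall u r, bndK K u -> N r <= LK K -> d (S mp K u + r *: q.1) (S mp K u) < q.2) /\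
    (forall w r, ~ P r -> S mp K w + r *: q.1 != 0)].

Lemma step_ex K mp ep : 0 < ep -> exists q, stepspec K mp ep q.
Proof.
move=> ep0.
have [l hl] := sums_fin mp K (LK K).
have [e1 e10 he1] : exists2 e, 0 < e & forall ab, ab \in [seq (a, b) | a <- l, b <- l] ->
    ab.1 != ab.2 -> 5 * e < d ab.1 ab.2.
  apply: fin_delta.
    by move=> ab a b ha b0 ba ne; apply: le_lt_trans (ha ne); rewrite ler_pM2l.
  move=> [a b] _ /=; case: (eqVneq a b) => [->|ne].
    by exists 1 => //; rewrite eqxx.
  have dab : d a b != 0 by apply/eqP => h; move/negP: ne; apply; apply/eqP; exact: (d_eq0 hM h).
  exists (d a b / 10) => [|_].
    by rewrite divr_gt0 // lt_neqAle (d_ge0 hM) andbT eq_sym.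
  have : 0 < d a b by rewrite lt_neqAle eq_sym dab (d_ge0 hM a b).
  move=> h0; lra.
set eK := Num.min e1 (ep / 2).
have eK0 : 0 < eK by rewrite lt_min e10 divr_gt0.
have [del del0 hdel] : exists2 del, 0 < del & forall ar, ar \in [seq (a, r) | a <- l, r <- ballL N (LK K)] ->
    forall x, d 0 x < del -> d (ar.1 + ar.2 *: x) ar.1 < eK.
  apply: fin_delta.
    move=> ar a b ha b0 ba x hx; apply: ha; exact: lt_le_trans hx ba.
  move=> [a r] _.
  case: hM => _ _ _ hadd hsc.
  have [d1 d10 hd1] := hadd a 0 eK eK0.
  have [d2 d20 hd2] := hsc r 0 d1 d10.
  exists d2 => // x hx /=.
  have h1 : d 0 (r *: x) < d1.
    have := hd2 r x; rewrite scaler0 subrr (N0 hN hprop hdisc) => h; exact (h d20 hx).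
  have h0 : d a a < d1 by rewrite (d_xx hM).
  have h2 := hd1 a (r *: x) h0 h1.
  by rewrite (d_sym hM); move: h2; rewrite addr0.
have [x [[Ax dx] nbad]] : exists x, (ann P x /\ d 0 x < del) /\
    ~ (exists w r, ~ P r /\ S mp K w + r *: x = 0).
  apply: NNPP => H; apply: (small_unc hM (A := ann P) _ hPu del0).
    by move=> x y hx hy a Pa; rewrite scalerBr hx // hy // subrr.
  have [g hg] := span_cov mp K.
  exists (fun q => G (enumR N (unp3 q).1.1) (- g (unp3 q).1.2) (unp3 q).2) => x hx.
  have [w [r [nr hr]]] : exists w r, ~ P r /\ S mp K w + r *: x = 0.
    apply: NNPP => H2; apply: H; exists x; split => //.
  have [i hi] := hg (S mp K w) (ex_intro _ w erefl).
  have [p hp] := enumR_surj hN hprop hdisc r.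
  have e : r *: x = - g i by rewrite hi; apply/eqP; rewrite -addr_eq0 addrC hr.
  have [j hj] := hG nr hx.1 e.
  by exists (pickle (p, i, j)); rewrite unp3P /= hp.
exists (x, eK); split => //=.
- by rewrite ge_min lexx orbT.
- move=> u u' bu bu' ne.
  have hin : (S mp K u, S mp K u') \in [seq (a, b) | a <- l, b <- l].
    by apply: allpairs_f; apply: hl => k kK; [exact: bu | exact: bu'].
  apply: le_lt_trans (he1 _ hin ne).
  by rewrite ler_pM2l ?ge_min ?lexx.
split.
- move=> u r bu hr.
  have hin : (S mp K u, r) \in [seq (a, r) | a <- l, r <- ballL N (LK K)].
    apply: allpairs_f; [by apply: hl => k kK; exact: bu | exact: ballLP].
  exact (hdel _ hin x dx).
- by move=> w r nr; apply/eqP => h; apply: nbad; exists w, r.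
Qed.

Definition step K mp ep := epsilon (inhabits ((0 : M), (1 : Real))) (stepspec K mp ep).

Fixpoint stage K : (nat -> M) * (nat -> Real) :=
  match K with
  | 0 => (fun _ => 0, fun _ => 1)
  | K'.+1 => let p := stage K' in let q := step K' p.1 (p.2 K'.-1) in
     (fun i => if i == K' then q.1 else p.1 i, fun i => if i == K' then q.2 else p.2 i)
  end.

Lemma stage_stable K i : (i < K)%N ->
  (stage K).1 i = (stage i.+1).1 i /\ (stage K).2 i = (stage i.+1).2 i.
Proof.
elim: K => // K IH; rewrite ltnS leq_eqVlt => /orP[/eqP->//|iK].
by rewrite /= (ltn_eqF iK); apply: IH.
Qed.

Lemma stage_pos K i : 0 < (stage K).2 i.
Proof.
elim: K i => [|K IH] i /=; first by [].
case: eqP => // _.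
have : stepspec K (stage K).1 ((stage K).2 K.-1) (step K (stage K).1 ((stage K).2 K.-1)).
  rewrite /step; apply: (epsilon_spec (inhabits ((0 : M), (1 : Real)))); apply: step_ex; exact: IH.
by case.
Qed.

Lemma S_ext m1 m2 K u : (forall k, (k < K)%N -> m1 k = m2 k) -> S m1 K u = S m2 K u.
Proof. by move=> h; apply: eq_big_nat => k /andP[_ kK]; rewrite h. Qed.

Lemma seq_ex : exists (m : nat -> M) (e : nat -> Real), forall K,
  stepspec K m (if K is K'.+1 then e K' else 1) (m K, e K).
Proof.
exists (fun i => (stage i.+1).1 i), (fun i => (stage i.+1).2 i) => K.
have E : S (stage K).1 K = S (fun i => (stage i.+1).1 i) K.
  apply: functional_extensionality => u; apply: S_ext => k kK.
  by case: (stage_stable kK).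
have Ep : (stage K).2 K.-1 = (if K is K'.+1 then (stage K'.+1).2 K' else 1) by case: K {E}.
have H : stepspec K (stage K).1 ((stage K).2 K.-1) (step K (stage K).1 ((stage K).2 K.-1)).
  exact: (epsilon_spec (inhabits ((0 : M), (1 : Real))) (stepspec K (stage K).1 ((stage K).2 K.-1))
   (step_ex K (stage K).1 (stage_pos K K.-1))).
have Eq : ((stage K.+1).1 K, (stage K.+1).2 K) = step K (stage K).1 ((stage K).2 K.-1).
  by rewrite /= eqxx; case: step.
rewrite Eq; move: H; rewrite /stepspec E Ep; done.
Qed.


Section Analysis.
Variable m : nat -> M.
Variable e : nat -> Real.
Hypothesis hme : forall K, stepspec K m (if K is K'.+1 then e K' else 1) (m K, e K).

Lemma e_pos K : 0 < e K. Proof. by case: (hme K). Qed.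
Lemma e_half K : e K.+1 <= e K / 2. Proof. by case: (hme K.+1). Qed.
Lemma m_ann K : ann P (m K). Proof. by case: (hme K). Qed.
Lemma e_sep K u u' : bndK K u -> bndK K u' -> S m K u != S m K u' ->
  5 * e K < d (S m K u) (S m K u').
Proof. by case: (hme K) => _ _ h _ _; apply: h. Qed.
Lemma e_step K u r : bndK K u -> N r <= LK K -> d (S m K u + r *: m K) (S m K u) < e K.
Proof. by case: (hme K) => _ _ _ _ [h _]; apply: h. Qed.
Lemma e_ind K w r : ~ P r -> S m K w + r *: m K != 0.
Proof. by case: (hme K) => _ _ _ _ [_ h]; apply: h. Qed.

Lemma e_dec k n : (k <= n)%N -> e n <= e k.
Proof.
move=> /subnKC <-; elim: (n - k)%N => [|j IH]; first by rewrite addn0.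
rewrite addnS; apply: le_trans (e_half _) _; apply: le_trans IH.
have := e_pos (k + j); lra.
Qed.

Lemma e_small eta : 0 < eta -> exists n, e n < eta.
Proof.
move=> eta0.
have hb n : e n <= e 0 / (2 ^+ n).
  elim: n => [|n IH]; first by rewrite expr0 divr1.
  apply: le_trans (e_half n) _; rewrite exprS invfM.
  suff -> : e 0 * (2^-1 / 2 ^+ n) = e 0 / 2 ^+ n / 2 by rewrite ler_pM2r ?invr_gt0.
  by ring.
set n := Num.Def.archi_bound (e 0 / eta).
have hn : e 0 / eta < n%:R by apply: archi_boundP; rewrite divr_ge0 // ltW // e_pos.
exists n; apply: le_lt_trans (hb n) _.
have p2 : 0 < (2 ^+ n : Real) by rewrite exprn_gt0.
rewrite ltr_pdivrMr //; rewrite ltr_pdivrMr // in hn.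
apply: lt_le_trans hn _; rewrite mulrC ler_pM2l // -natrX ler_nat.
by apply: ltnW; apply: ltn_expl.
Qed.

Definition bnd c (u : nat -> R) := forall k, N (u k) <= c%:R * (k`!)%:R.

Lemma bnd_K c u K : bnd c u -> (c <= K)%N -> bndK K u /\ N (u K) <= LK K.
Proof.
move=> bu cK.
have H k : (k <= K)%N -> N (u k) <= LK K.
  move=> kK; apply: le_trans (bu k) _; rewrite /LK -natrM ler_nat.
  by apply: leq_mul => //; apply: fact_mono.
by split => [k kK|]; apply: H => //; exact: ltnW.
Qed.

Lemma tail c u n j : bnd c u -> (c <= n)%N ->
  d (S m (n + j) u) (S m n u) <= 2 * e n - 2 * e (n + j).
Proof.
move=> bu cn; elim: j => [|j IH]; first by rewrite addn0 (d_xx hM) subrr.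
have [b1 b2] := bnd_K bu (leq_trans cn (leq_addr j n)).
have h1 := e_step b1 b2.
have h2 := e_half (n + j).
rewrite addnS SS; apply: le_trans (d_tri hM _ (S m (n + j) u) _) _.
lra.
Qed.

Lemma tail' c u n K : bnd c u -> (c <= n)%N -> (n <= K)%N ->
  d (S m K u) (S m n u) <= 2 * e n.
Proof.
move=> bu cn /subnKC <-; apply: le_trans (tail _ bu cn) _.
have := e_pos (n + (K - n)); lra.
Qed.

Definition conv (x : nat -> M) (X : M) := forall eta : Real, 0 < eta ->
  exists K, forall n, (K <= n)%N -> d (x n) X < eta.

Lemma lim_ex c u : bnd c u -> exists X, conv (fun K => S m K u) X.
Proof.
move=> bu; case: hM => _ hcomp _ _ _; apply: hcomp => eta eta0.
have [n0 hn0] := e_small (divr_gt0 eta0 (ltr0n _ 4)).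
exists (maxn c n0) => p q hp hq.
have c1 : (c <= maxn c n0)%N := leq_maxl _ _.
have h1 := tail' bu c1 hp; have h2 := tail' bu c1 hq.
have h3 := e_dec (leq_maxr c n0).
apply: le_lt_trans (d_tri hM _ (S m (maxn c n0) u) _) _.
rewrite [d (S m _ u) (S m q u)](d_sym hM); lra.
Qed.

Lemma le_of_eps (a b : Real) : (forall eta, 0 < eta -> a <= b + eta) -> a <= b.
Proof.
move=> h; rewrite leNgt; apply/negP => ab.
have := h ((a - b) / 2); rewrite divr_gt0 ?subr_gt0 // => /(_ isT); lra.
Qed.

Lemma lim_near c u X : bnd c u -> conv (fun K => S m K u) X ->
  forall n, (c <= n)%N -> d X (S m n u) <= 2 * e n.
Proof.
move=> bu cv n cn; apply: le_of_eps => eta eta0.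
have [K hK] := cv eta eta0.
have h1 := hK (maxn K n) (leq_maxl _ _).
have h2 := tail' bu cn (leq_maxr K n).
apply: le_trans (d_tri hM X (S m (maxn K n) u) _) _.
rewrite (d_sym hM X); lra.
Qed.

Lemma conv_uniq x X Y : conv x X -> conv x Y -> X = Y.
Proof.
move=> hX hY; apply: (d_eq0 hM); apply/eqP; rewrite eq_le (d_ge0 hM) andbT.
apply: le_of_eps => eta eta0; rewrite add0r.
have [K1 h1] := hX (eta / 2) (divr_gt0 eta0 (ltr0n _ 2)).
have [K2 h2] := hY (eta / 2) (divr_gt0 eta0 (ltr0n _ 2)).
have a1 := h1 (maxn K1 K2) (leq_maxl _ _); have a2 := h2 (maxn K1 K2) (leq_maxr _ _).
apply: le_trans (d_tri hM X (x (maxn K1 K2)) Y) _.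
rewrite (d_sym hM X); lra.
Qed.

Lemma conv_ext x y X : (forall n, x n = y n) -> conv x X -> conv y X.
Proof. by move=> h cv eta /cv [K hK]; exists K => n /hK; rewrite h. Qed.

Lemma conv_lin r x y X Y : conv x X -> conv y Y ->
  conv (fun n => r *: x n + y n) (r *: X + Y).
Proof.
move=> hX hY eta eta0.
case: hM => _ _ _ hadd hsc.
have [d1 d10 hd1] := hadd (r *: X) Y eta eta0.
have [d2 d20 hd2] := hsc r X d1 d10.
have [K1 h1] := hX d2 d20; have [K2 h2] := hY d1 d10.
exists (maxn K1 K2) => n hn.
have a1 := h1 n (leq_trans (leq_maxl _ _) hn).
have a2 := h2 n (leq_trans (leq_maxr _ _) hn).
have N00 : N (r - r) < d2 by rewrite subrr (N0 hN hprop hdisc).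
have a3 := hd2 r (x n) N00 (eq_ind _ (fun z => z < d2) a1 _ (d_sym hM _ _)).
have a4 := hd1 (r *: x n) (y n) a3 (eq_ind _ (fun z => z < d1) a2 _ (d_sym hM _ _)).
by rewrite (d_sym hM); exact: a4.
Qed.

Lemma S_modP K u v : (forall k, (k < K)%N -> P (u k - v k)) -> S m K u = S m K v.
Proof.
move=> h; apply: eq_big_nat => k /andP[_ kK]; apply/eqP; rewrite -subr_eq0 -scalerBl.
by rewrite (m_ann k) //; apply: h.
Qed.

Lemma S_sub K u v : S m K (fun k => u k - v k) = S m K u - S m K v.
Proof. by rewrite /S -sumrB; apply: eq_bigr => k _; rewrite scalerBl. Qed.

Lemma S_lin K r u v : S m K (fun k => r * u k + v k) = r *: S m K u + S m K v.
Proof.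
by rewrite /S scaler_sumr -big_split; apply: eq_bigr => k _; rewrite scalerDl scalerA.
Qed.

Lemma indep K w : S m K w = 0 -> forall k, (k < K)%N -> P (w k).
Proof.
elim: K => // K IH; rewrite SS => h k.
case: (classic (P (w K))) => PK.
  move: h; rewrite (m_ann K) // addr0 => /IH h'.
  by rewrite ltnS leq_eqVlt => /orP[/eqP->//|]; apply: h'.
by move/eqP: h; rewrite (negbTE (e_ind _ _ PK)).
Qed.

Definition Flim (u : nat -> R) : M := epsilon (inhabits (0 : M)) (conv (fun K => S m K u)).
Lemma Flim_spec c u : bnd c u -> conv (fun K => S m K u) (Flim u).
Proof. move=> bu; rewrite /Flim; apply: epsilon_spec; exact: lim_ex bu. Qed.


Notation qn := (quot_norm N P).
Definition fmap (s : nat -> R) : M := Flim (fun k => rho N P (s k)).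

Lemma rhoP' a : P (rho N P a - a) /\ N (rho N P a) = qn a.
Proof. exact: (rhoP hN hprop hdisc hP). Qed.

Lemma rho_bnd s : in_l1 N P s -> exists c, bnd c (fun k => rho N P (s k)).
Proof.
move=> hs; have [c hc] := l1_bound hN hprop hdisc hP hs.
by exists c => k; rewrite (rhoP' (s k)).2.
Qed.

Lemma rho_modP a b : P (a - b) -> P (rho N P a - rho N P b).
Proof.
move=> hab; have h1 := (rhoP' a).1; have h2 := (rhoP' b).1.
have -> : rho N P a - rho N P b = (rho N P a - a) - (rho N P b - b) + (a - b) by ring.
by apply: (ID hP); [apply: (IB hP) |].
Qed.

Lemma fmap_spec s : in_l1 N P s -> conv (fun K => S m K (fun k => rho N P (s k))) (fmap s).
Proof. by move=> /rho_bnd [c hc]; exact: Flim_spec hc. Qed.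

Lemma Flim_of u X : conv (fun K => S m K u) X -> Flim u = X.
Proof.
move=> cu; apply: (conv_uniq (x := fun K => S m K u) _ cu).
rewrite /Flim; apply: epsilon_spec; by exists X.
Qed.

Lemma embeds : l1_embeds N P (fun _ : M => True) (@eq M) +%R ( *:%R) d.
Proof.
have [eq0 eq00 heq0] := qn_pos hN hprop hdisc hP.
exists fmap; split => //.
- move=> r s t hs ht /=; apply: Flim_of.
  apply: (conv_ext (x := fun K => S m K (fun k => r * rho N P (s k) + rho N P (t k)))).
    move=> K; apply: S_modP => k _.
    have h1 := (rhoP' (r * s k + t k)).1; have h2 := (rhoP' (s k)).1; have h3 := (rhoP' (t k)).1.
    have -> : (r * rho N P (s k) + rho N P (t k)) - rho N P (r * s k + t k) =
      r * (rho N P (s k) - s k) + (rho N P (t k) - t k) - (rho N P (r * s k + t k) - (r * s k + t k)) by ring.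
    apply: (IB hP) => //; apply: (ID hP) => //; exact: (IM hP).
  apply: (conv_ext (x := fun K => r *: S m K (fun k => rho N P (s k)) + S m K (fun k => rho N P (t k)))).
    by move=> K; rewrite S_lin.
  by apply: conv_lin; apply: fmap_spec.
- move=> s t hs ht; split => [eqst | hst].
  + have [cs bs] := rho_bnd hs; have [ct bt] := rho_bnd ht.
    have bs' : bnd (maxn cs ct) (fun k => rho N P (s k)).
      move=> k; apply: le_trans (bs k) _; rewrite ler_wpM2r ?ler0n // ler_nat leq_maxl //.
    have bt' : bnd (maxn cs ct) (fun k => rho N P (t k)).
      move=> k; apply: le_trans (bt k) _; rewrite ler_wpM2r ?ler0n // ler_nat leq_maxr //.
    move=> j; apply: NNPP => nj.
    set c := maxn cs ct; set n := maxn c j.+1.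
    have cn : (c <= n)%N := leq_maxl _ _.
    have jn : (j < n)%N := leq_maxr _ _.
    have [b1 _] := bnd_K bs' cn; have [b2 _] := bnd_K bt' cn.
    have Seq : S m n (fun k => rho N P (s k)) = S m n (fun k => rho N P (t k)).
      apply: NNPP => ne.
      have h5 := e_sep b1 b2 (introN eqP ne).
      have h1 := lim_near bs' (fmap_spec hs) cn.
      have h2 := lim_near bt' (fmap_spec ht) cn.
      rewrite -eqst in h2.
      have h3 := d_tri hM (S m n (fun k => rho N P (s k))) (fmap s) (S m n (fun k => rho N P (t k))).
      rewrite (d_sym hM _ (fmap s)) in h3.
      have := e_pos n; lra.
    have := indep (k := j) (w := fun k => rho N P (s k) - rho N P (t k)) _ jn.
    move=> /(_ _) h; apply: nj.
    have h' : P (rho N P (s j) - rho N P (t j)) by apply: h; rewrite S_sub Seq subrr.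
    have h1 := (rhoP' (s j)).1; have h2 := (rhoP' (t j)).1.
    have -> : s j - t j = (rho N P (s j) - rho N P (t j)) - (rho N P (s j) - s j) + (rho N P (t j) - t j) by ring.
    by apply: (ID hP) => //; apply: (IB hP).
  + apply: Flim_of; apply: (conv_ext (x := fun K => S m K (fun k => rho N P (t k)))).
      move=> K; apply: S_modP => k _; apply: rho_modP.
      by have := IN hP (hst k); rewrite opprB.
    exact: fmap_spec.
- move=> s hs eta eta0.
  have [cs bs] := l1_bound hN hprop hdisc hP hs.
  have [n0 hn0] := e_small (divr_gt0 eta0 (ltr0n _ 4)).
  set c := cs.+1; set n := maxn c n0.
  have cn : (c <= n)%N := leq_maxl _ _.
  have hen := e_dec (leq_maxr c n0 : (n0 <= n)%N).
  exists (Num.min 1 (eq0 / (n`!)%:R)).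
    by rewrite lt_min ltr01 divr_gt0 // ltr0n fact_gt0.
  move=> t ht hdist.
  have hst := l1_sub hN hprop hdisc hP hs ht.
  have hk k : qn (s k - t k) / (k`!)%:R < Num.min 1 (eq0 / (n`!)%:R).
    apply: le_lt_trans hdist; exact: (term_le_sum (@w_ge0 _ _ hN hprop hdisc _ hP _) hst k).
  have fk k : 0 < ((k`!)%:R : Real) by rewrite ltr0n fact_gt0.
  have bt : bnd c (fun k => rho N P (t k)).
    move=> k; rewrite (rhoP' (t k)).2.
    have e1 : t k = s k + - (s k - t k) by ring.
    rewrite e1; apply: le_trans (qn_add hN hprop hdisc hP _ _) _.
    rewrite (qn_opp hN hprop hdisc hP).
    have := hk k; rewrite lt_min => /andP[a _].
    rewrite ltr_pdivrMr // mul1r in a.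
    have := bs k; rewrite /c -addn1 natrD mulrDl mul1r; lra.
  have bs' : bnd c (fun k => rho N P (s k)).
    move=> k; rewrite (rhoP' (s k)).2; apply: le_trans (bs k) _.
    by rewrite ler_wpM2r ?ler0n // ler_nat /c.
  have Seq : S m n (fun k => rho N P (s k)) = S m n (fun k => rho N P (t k)).
    apply: S_modP => k kn; apply: rho_modP; apply: NNPP => nP.
    have := heq0 _ nP; have := hk k; rewrite lt_min => /andP[_ a].
    have fkn : ((k`!)%:R : Real) <= (n`!)%:R by rewrite ler_nat fact_mono // ltnW.
    rewrite ltr_pdivrMr // in a.
    have : eq0 / (n`!)%:R * (k`!)%:R <= eq0.
      rewrite mulrAC ler_pdivrMr ?ltr0n ?fact_gt0 //; by rewrite ler_pM2l.
    lra.
  have h1 := lim_near bs' (fmap_spec hs) cn.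
  have h2 := lim_near bt (fmap_spec ht) cn.
  rewrite -Seq in h2.
  have h3 := d_tri hM (fmap s) (S m n (fun k => rho N P (s k))) (fmap t).
  rewrite (d_sym hM (S m n _) (fmap t)) in h3.
  lra.
Qed.

End Analysis.

End Construction.

Section Final.
Variable R : idomainType.
Variable N : R -> Real.
Hypothesis hN : is_norm N.
Hypothesis hprop : norm_proper N.
Hypothesis hdisc : norm_discrete N.

Lemma part3 P Q : is_prime_ideal P -> is_prime_ideal Q ->
  ~ (forall x, P x <-> Q x) -> ~ l1_embeds_l1 N P Q.
Proof.
move=> [hP nP1 pP] [hQ nQ1 pQ] neq [f [_ lin inj _]].
pose e0 := fun k : nat => if k == 0%N then (1 : R) else 0.
pose z := fun _ : nat => (0 : R).
have fin x : in_l1 N P (fun k => x * e0 k + z k).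
  apply: (l1_fin hN hprop hdisc hP (n := 1)) => k k1.
  by rewrite /e0 /z; case: eqP => [e|]; [rewrite e in k1 | rewrite mulr0 addr0].
have zl : in_l1 N P z by apply: (l1_fin hN hprop hdisc hP (n := 0)).
have el : in_l1 N P e0 by apply: (l1_fin hN hprop hdisc hP (n := 1)) => k k1; rewrite /e0; case: eqP => // e; rewrite e in k1.
have Qz k : Q (f z k).
  have := lin 1 z z zl zl k.
  have -> : (fun k => 1 * z k + z k) = z by apply: functional_extensionality => i; rewrite /z mul1r addr0.
  by rewrite mul1r opprD addrA subrr add0r => /(IN hQ); rewrite opprK.
have hx : exists x, (P x /\ ~ Q x) \/ (Q x /\ ~ P x).
  apply: NNPP => H; apply: neq => x; split => hx; apply: NNPP => hy; apply: H; exists x; tauto.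
have [x [[Px nQx]|[Qx nPx]]] := hx.
- have h1 : eqmod_seq Q (f (fun k => x * e0 k + z k)) (f z).
    apply/(inj _ _ (fin x) zl) => k; rewrite /e0 /z; case: eqP => _.
      by rewrite mulr1 !addr0 subr0.
    by rewrite mulr0 !addr0 subrr; exact: I0 hP.
  have h2 := lin x e0 z el zl.
  have hxe k : Q (x * f e0 k).
    have e : x * f e0 k = (f (fun k => x * e0 k + z k) k - f z k) -
      (f (fun k => x * e0 k + z k) k - (x * f e0 k + f z k)) by ring.
    rewrite e; apply: (IB hQ); [exact: h1 | exact: h2].
  have : ~ eqmod_seq Q (f e0) (f z).
    move/(inj _ _ el zl) => /(_ 0%N); rewrite /e0 /z /= subr0; exact: nP1.
  move=> H; apply: H => k; rewrite /= .
  case: (pQ _ _ (hxe k)) => // Qf.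
  by apply: (IB hQ) => //; exact: Qz.
- apply: nPx.
  have h1 : eqmod_seq Q (f (fun k => x * e0 k + z k)) (f z).
    move=> k; have h2 := lin x e0 z el zl k.
    have e : f (fun k => x * e0 k + z k) k - f z k =
      (f (fun k => x * e0 k + z k) k - (x * f e0 k + f z k)) + f e0 k * x by ring.
    rewrite e; apply: (ID hQ); [exact: h2 | exact: (IM hQ)].
  have := (inj _ _ (fin x) zl).1 h1 0%N.
  by rewrite /e0 /z /= mulr1 !addr0 subr0.
Qed.

Lemma part1b (M : lmodType R) d P : is_prime_ideal P -> countable_type M ->
  ~ l1_embeds N P (fun _ : M => True) (@eq M) +%R ( *:%R) d.
Proof.
move=> [hP nP1 _] [g hg] [f [_ _ inj _]].
pose bs (b : nat -> bool) := fun k => ((b k)%:R : R).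
pose bn n := epsilon (inhabits (fun _ : nat => false)) (fun b => f (bs b) = g n).
pose bd := fun k => ~~ bn k k.
have [n hn] := hg (f (bs bd)).
have hbn : f (bs (bn n)) = g n.
  by apply: (epsilon_spec (inhabits (fun _ : nat => false)) (fun b => f (bs b) = g n)); exists bd.
have := (inj _ _ (l1_bool hN hprop hdisc hP (bn n)) (l1_bool hN hprop hdisc hP bd)).1.
rewrite hbn hn => /(_ erefl n); rewrite /bs /bd.
case: (bn n n) => /=; rewrite ?subr0 ?sub0r //.
by move/(IN hP); rewrite opprK.
Qed.

End Final.

Theorem theorem4p1 (R : idomainType) (N : R -> Real)
  (hN : is_norm N) (hprop : norm_proper N) (hdisc : norm_discrete N)
  (hpid : is_principal_ideal_domain R)
  (M : lmodType R) (d : M -> M -> Real) (hM : polish_module N d) :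
  ((countable_type M \/
    exists P : R -> Prop, is_prime_ideal P /\
      l1_embeds N P (fun _ : M => True) (@eq M) +%R ( *:%R) d)
   /\
   ~ (countable_type M /\
      exists P : R -> Prop, is_prime_ideal P /\
        l1_embeds N P (fun _ : M => True) (@eq M) +%R ( *:%R) d))
  /\
  (forall P Q : R -> Prop, is_prime_ideal P -> is_prime_ideal Q ->
     ~ (forall x, P x <-> Q x) -> ~ l1_embeds_l1 N P Q).
Proof.
split; last by move=> P Q hP hQ neq; exact: (part3 hN hprop hdisc hP hQ neq).
split; last first.
  by move=> [hc [P [hP he]]]; exact: (part1b hN hprop hdisc hP hc he).
case: (classic (countable_type M)) => hc; [by left | right].
have Mu : ~ cov (fun _ : M => True).
  by move=> [g hg]; apply: hc; exists g => x; exact: hg.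
have [P [bP hmax]] := max_bad hpid Mu.
have [Ppr hcov] := max_bad_prime hpid bP hmax.
have hP : is_ideal P by case: Ppr.
have [G hG] := fiber_cov hpid hP hcov.
have hPu : ~ cov (@ann R M P) by case: bP.
have [m [e hme]] := seq_ex hN hprop hdisc hM hP hPu hG.
exists P; split => //.
exact: (embeds hN hprop hdisc hM hP hPu hG hme).
Qed.
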